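(* Let $d\ge 1$. Given a set of $d+3$ points in $\mathbb{R}^d$, there are two disjoint subsets $A$ and $B$ of it with $|A|=|B|$ such that $\mathrm{conv}(A)\cap\mathrm{conv}(B)\neq\emptyset$. *)

(* Defs.v *)
From HB Require Import structures.
From mathcomp Require Import all_boot all_order all_algebra.
From mathcomp Require Import reals.
Set Implicit Arguments. Unset Strict Implicit. Unset Printing Implicit Defensive.
Import Order.TTheory GRing.Theory Num.Theory.
Local Open Scope ring_scope.

(* A finite set of n points is
   given by an injective indexing p : 'I_n -> 'rV[R]_d; a subset of it is
   given by a set of indices A : {set 'I_n}. *)
Definition in_conv (R : realType) (d n : nat) (p : 'I_n -> 'rV[R]_d)
    (A : {set 'I_n}) (x : 'rV[R]_d) : Prop :=
  exists w : 'I_n -> R,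
    (forall i, i \in A -> 0 <= w i) /\
    \sum_(i in A) w i = 1 /\
    x = \sum_(i in A) w i *: p i.

(* Main.v *)
Require Import Defs.
From HB Require Import structures.
From mathcomp Require Import all_boot all_order all_algebra.
From mathcomp Require Import reals.
From mathcomp Require boolp classical_sets.
From mathcomp Require Import ring lra zify.
From Stdlib Require Import Lia.
Import Order.TTheory GRing.Theory Num.Theory.
Local Open Scope ring_scope.

Section Key.
Variable R : realType.

Lemma card_posneg {n} (f : 'I_n -> R) :
  (#|[set i | (0 < f i)%R]| + #|[set i | (f i < 0)%R]| <= n)%N.
Proof.
rewrite -cardsUI.
have -> : [set i | (0 < f i)%R] :&: [set i | (f i < 0)%R] = set0.
  apply/setP=> i; rewrite !inE; apply/negbTE; apply/negP=> /andP[h1 h2].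
  by have := lt_trans h1 h2; rewrite ltxx.
by rewrite cards0 addn0 -[X in (_ <= X)%N]card_ord max_card.
Qed.

Lemma persist {n} (J : {set 'I_n}) (a b : 'I_n -> R) :
  (forall i, i \in J -> 0 < a i) ->
  exists2 e : R, 0 < e & forall s, `|s| <= e -> forall i, i \in J -> 0 < a i + s * b i.
Proof.
move=> Ha.
set S := \sum_(i in J) `|b i| / a i.
have S0 : 0 <= S by apply: sumr_ge0 => i /Ha ai; rewrite divr_ge0 // ltW.
exists (1 + S)^-1; first by rewrite invr_gt0; lra.
move=> s hs i iJ.
have ai := Ha i iJ.
have hi : `|b i| / a i <= S.
  by rewrite /S (bigD1 i) //= lerDl; apply: sumr_ge0 => j /andP[/Ha aj _]; rewrite divr_ge0 // ltW.
have h1 : `|b i| <= S * a i by rewrite -ler_pdivrMr.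
have h2 : `|s * b i| <= (1 + S)^-1 * (S * a i).
  by rewrite normrM; apply: ler_pM.
have h3 : (1 + S)^-1 * (S * a i) < a i.
  rewrite ltr_pdivrMl; last lra.
  have : 0 < S * a i + a i by nra.
  nra.
have : - `|s * b i| <= s * b i by rewrite lerNl -normrN ler_norm.
lra.
Qed.

Lemma key1 n k (u v : 'I_n -> R) : (n <= k.*2.+1)%N ->
  (k < #|[set i | (0 < v i)%R]|)%N ->
  exists t, (#|[set i | (0 < u i + t * v i)%R]| <= k)%N /\           (#|[set i | (u i + t * v i < 0)%R]| <= k)%N.
Proof.
move=> hn hv.
pose Pc t := #|[set i | (0 < u i + t * v i)%R]|.
pose Nc t := #|[set i | (u i + t * v i < 0)%R]|.
have PN t : (Pc t + Nc t <= n)%N by exact: (card_posneg (fun i => u i + t * v i)).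
pose E : R -> Prop := fun t => (k < Nc t)%N.
pose M := \sum_i `|u i| / `|v i|.
have bnd i : 0 < v i -> `|u i| <= M * v i.
  move=> vi; rewrite -ler_pdivrMr //.
  have -> : `|u i| / v i = `|u i| / `|v i| by rewrite (gtr0_norm vi).
  by rewrite /M (bigD1 i) //= lerDl; apply: sumr_ge0 => j _; rewrite divr_ge0.
have E0 : E (-1 - M).
  rewrite /E; apply: (leq_trans hv); apply: subset_leq_card; apply/subsetP => i.
  rewrite !inE => vi; have := bnd i vi; have := ler_norm (u i).
  have : 0 <= M * v i by apply: le_trans (bnd i vi).
  nra.
have Eub t : E t -> t <= 1 + M.
  rewrite /E => Et; rewrite leNgt; apply/negP => tM.
  have : (k < Pc t)%N.
    apply: (leq_trans hv); apply: subset_leq_card; apply/subsetP => i.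
    rewrite !inE => vi; have := bnd i vi; have := ler_norm (- u i).
    rewrite normrN.
    have : 0 <= M * v i by apply: le_trans (bnd i vi).
    nra.
  have := PN t; move: Et; rewrite -/(Nc t) -/(Pc t). lia.
have hs : classical_sets.has_sup E.
  by split; [exists (-1 - M) | exists (1 + M) => t Et; exact: Eub].
pose T := reals.sup E.
have supub t : E t -> t <= T by move=> Et; exact: (reals.sup_upper_bound hs).
have xS t s i : u i + (t + s) * v i = (u i + t * v i) + s * v i by ring.
exists T; split.
- rewrite leqNgt; apply/negP => hP.
  have [|e e0 he] := persist [set i | (0 < u i + T * v i)%R]
      (fun i => u i + T * v i) v; first by move=> i; rewrite inE.
  have [t0 Et0 lt0] := reals.sup_adherent e0 hs.
  have t0T : t0 <= T := supub _ Et0.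
  have : (k < Pc t0)%N.
    apply: (leq_trans hP); apply: subset_leq_card; apply/subsetP => i.
    rewrite !inE => hi.
    have := he (t0 - T) _ i; rewrite inE => /(_ _ hi).
    rewrite -xS [T + _]addrC subrK; apply.
    rewrite ler_norml; apply/andP; split; move: lt0 t0T; move=> h1 h2; have {}h1 : T - e < t0 := h1; lra.
  have := PN t0; move: Et0; rewrite /E. lia.
- rewrite leqNgt; apply/negP => hN.
  have [|e e0 he] := persist [set i | (u i + T * v i < 0)%R]
      (fun i => - (u i + T * v i)) (fun i => - v i);
    first by move=> i; rewrite inE oppr_gt0.
  have : E (T + e).
    apply: (leq_trans hN); apply: subset_leq_card; apply/subsetP => i.
    rewrite !inE => hi.
    have := he e _ i; rewrite inE => /(_ _ hi).
    rewrite xS; rewrite ger0_norm ?(ltW e0) // => /(_ (lexx _)).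
    rewrite mulrN -opprD oppr_gt0; apply.
  move/supub; lra.
Qed.

Lemma key2 n k (u v : 'I_n -> R) : (n <= k.*2.+1)%N ->
  exists a b : R, (a = 1 \/ (a = 0 /\ b = 1)) /\
    (#|[set i | (0 < a * u i + b * v i)%R]| <= k)%N /\
    (#|[set i | (a * u i + b * v i < 0)%R]| <= k)%N.
Proof.
move=> hn.
case: (leqP #|[set i | (0 < v i)%R]| k) => hp.
  case: (leqP #|[set i | (v i < 0)%R]| k) => hq.
    exists 0, 1; split; first by right.
    split.
      by rewrite (@eq_card _ _ [set i | (0 < v i)%R]) // => i; rewrite !inE mul0r add0r mul1r.
    by rewrite (@eq_card _ _ [set i | (v i < 0)%R]) // => i; rewrite !inE mul0r add0r mul1r.
  have hq' : (k < #|[set i | (0 < (- v i))%R]|)%N.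
    by rewrite (@eq_card _ _ [set i | (v i < 0)%R]) // => i; rewrite !inE oppr_gt0.
  have [t [h1 h2]] := @key1 _ _ u (fun i => - v i) hn hq'.
  exists 1, (- t); split; first by left.
  split.
    by rewrite (@eq_card _ _ [set i | (0 < u i + t * - v i)%R]) // => i; rewrite !inE mul1r mulrN mulNr.
  by rewrite (@eq_card _ _ [set i | (u i + t * - v i < 0)%R]) // => i; rewrite !inE mul1r mulrN mulNr.
have [t [h1 h2]] := @key1 _ _ u v hn hp.
exists 1, t; split; first by left.
split.
  by rewrite (@eq_card _ _ [set i | (0 < u i + t * v i)%R]) // => i; rewrite !inE mul1r.
by rewrite (@eq_card _ _ [set i | (u i + t * v i < 0)%R]) // => i; rewrite !inE mul1r.
Qed.
End Key.
Lemma sub_card (T : finType) (A : {set T}) m : (m <= #|A|)%N ->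
  exists2 B : {set T}, B \subset A & #|B| = m.
Proof.
elim: m => [|m IH] hm; first by exists set0; rewrite ?sub0set ?cards0.
have [B BA cB] := IH (ltnW hm).
have : A :\: B != set0.
  rewrite -card_gt0 cardsD (setIidPr BA) cB; lia.
case/set0Pn => x; rewrite inE => /andP[xB xA].
exists (x |: B); first by rewrite subUset sub1set xA BA.
by rewrite cardsU1 xB cB.
Qed.

Lemma sum_split {V : nmodType} {N : nat} {A B : {set 'I_N}} (F : 'I_N -> V) :
  [disjoint A & B] -> (forall i, i \notin A -> i \notin B -> F i = 0) ->
  \sum_i F i = \sum_(i in A) F i + \sum_(i in B) F i.
Proof.
move=> dAB hF.
rewrite (bigID (mem A)) /=; congr (_ + _).
rewrite (bigID (mem B)) /= [X in _ + X]big1 ?addr0; last first.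
  by move=> i /andP[/hF h /h].
apply: eq_bigl => i /=; case iB: (i \in B); rewrite ?andbF ?andbT //.
by rewrite (disjointFl dAB iB).
Qed.

Lemma final (R : realType) d n (p : 'I_n -> 'rV[R]_d) (w : 'I_n -> R) k :
  (exists j, w j != 0) -> \sum_i w i = 0 -> \sum_i w i *: p i = 0 ->
  (#|[set i | (0 < w i)%R]| <= k)%N -> (#|[set i | (w i < 0)%R]| <= k)%N ->
  (k.*2 <= n)%N ->
  exists A B : {set 'I_n},
    [/\ [disjoint A & B], #|A| = #|B| &
        exists x : 'rV[R]_d, in_conv p A x /\ in_conv p B x].
Proof.
move=> [j wj] s0 s1 hP hN hk.
set P := [set i | (0 < w i)%R] in hP *.
set Ng := [set i | (w i < 0)%R] in hN *.
have dPN : [disjoint P & Ng].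
  rewrite -setI_eq0; apply/eqP/setP => i; rewrite !inE.
  by apply/negbTE/negP => /andP[h1 h2]; have := lt_trans h1 h2; rewrite ltxx.
set Z := ~: (P :|: Ng).
have cZ : #|Z| = (n - (#|P| + #|Ng|))%N.
  have := cardsC (P :|: Ng); rewrite card_ord cardsU.
  have -> : P :&: Ng = set0 by apply/eqP; rewrite setI_eq0.
  rewrite cards0 subn0 -/Z; lia.
have [Z1 Z1Z cZ1] := @sub_card _ Z (k - #|P|) ltac:(rewrite cZ; lia).
have [Z2 Z2Z cZ2] := @sub_card _ (Z :\: Z1) (k - #|Ng|)
  ltac:(rewrite cardsD (setIidPr Z1Z) cZ cZ1; lia).
have inZ i : i \in Z = (i \notin P) && (i \notin Ng) by rewrite !inE negb_or.
have Z1P i : i \in Z1 -> (i \notin P) && (i \notin Ng).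
  by move=> /(subsetP Z1Z); rewrite inZ.
have Z2P i : i \in Z2 -> [&& (i \notin P), (i \notin Ng) & (i \notin Z1)].
  by move=> /(subsetP Z2Z); rewrite inE inZ => /andP[-> /andP[-> ->]].
set A := P :|: Z1.
set B := Ng :|: Z2.
have dAB : [disjoint A & B].
  rewrite -setI_eq0; apply/eqP/setP => i; rewrite in_set0 in_setI !in_setU.
  apply/negbTE/negP => /andP[/orP[iP|iZ1] /orP[iN|iZ2]].
  - by move: iP iN; rewrite !inE => iP iN; have := lt_trans iP iN; rewrite ltxx.
  - by have := Z2P _ iZ2; rewrite iP.
  - by have := Z1P _ iZ1; rewrite iN andbF.
  - by have := Z2P _ iZ2; rewrite iZ1 !andbF.
have cA : #|A| = k.
  rewrite cardsU cZ1.
  have -> : P :&: Z1 = set0.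
    apply/setP => i; rewrite in_set0 in_setI; apply/negbTE/negP => /andP[iP /Z1P].
    by rewrite iP.
  rewrite cards0; lia.
have cB : #|B| = k.
  rewrite cardsU cZ2.
  have -> : Ng :&: Z2 = set0.
    apply/setP => i; rewrite in_set0 in_setI; apply/negbTE/negP => /andP[iN /Z2P].
    by rewrite iN andbF.
  rewrite cards0; lia.
have wA i : i \in A -> 0 <= w i.
  rewrite in_setU => /orP[|/Z1P]; first by rewrite inE => /ltW.
  by rewrite !inE -!leNgt => /andP[h1 h2]; apply: h2.
have wB i : i \in B -> w i <= 0.
  rewrite in_setU => /orP[|/Z2P]; first by rewrite inE => /ltW.
  by rewrite !inE -!leNgt => /and3P[h1 h2 _].
have w0 i : i \notin A -> i \notin B -> w i = 0.
  rewrite !in_setU !negb_or => /andP[iP _] /andP[iN _].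
  by move: iP iN; rewrite !inE -!leNgt => h1 h2; apply/eqP; rewrite eq_le h1 h2.
set sA := \sum_(i in A) w i.
set sB := \sum_(i in B) w i.
have sAB : sA + sB = 0 by rewrite -s0 (sum_split w dAB w0).
have sA0 : 0 <= sA by apply: sumr_ge0.
have sAp : 0 < sA.
  rewrite lt_def sA0 andbT; apply/negP => /eqP sA00.
  have hA := psumr_eq0P wA sA00.
  have sB00 : \sum_(i in B) - w i = 0.
    by rewrite sumrN -/sB; have := sAB; rewrite sA00 add0r => ->; rewrite oppr0.
  have wB' i : i \in B -> 0 <= - w i by move=> /wB; rewrite oppr_ge0.
  have hB := psumr_eq0P wB' sB00.
  move: wj; case jA: (j \in A); first by rewrite hA ?eqxx.
  case jB: (j \in B); first by move: (hB j jB) => /eqP; rewrite oppr_eq0 => /eqP ->; rewrite eqxx.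
  by rewrite w0 ?jA ?jB ?eqxx.
have hw0' i : i \notin A -> i \notin B -> w i *: p i = 0.
  by move=> iA iB; rewrite w0 // scale0r.
have vAB : \sum_(i in A) w i *: p i + \sum_(i in B) w i *: p i = 0.
  by rewrite -(sum_split (fun i => w i *: p i) dAB hw0') s1.
exists A, B; split => //; first by rewrite cA cB.
exists (sA^-1 *: \sum_(i in A) w i *: p i); split.
- exists (fun i => w i / sA); split; [|split].
  + by move=> i /wA wi; rewrite divr_ge0 // ltW.
  + by rewrite -mulr_suml -/sA mulfV // gt_eqF.
  + rewrite scaler_sumr; apply: eq_bigr => i _; rewrite scalerA mulrC.
    by [].
- exists (fun i => - w i / sA); split; [|split].
  + by move=> i /wB wi; rewrite divr_ge0 ?oppr_ge0 // ltW.
  + rewrite -mulr_suml sumrN -/sB.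
    have -> : - sB = sA by rewrite -[sA](addrK sB) sAB sub0r.
    by rewrite mulfV // gt_eqF.
  + have -> : \sum_(i in A) w i *: p i = - \sum_(i in B) w i *: p i.
      by apply/eqP; rewrite -addr_eq0 vAB.
    rewrite -sumrN scaler_sumr; apply: eq_bigr => i _.
    by rewrite scalerN scalerA -scaleNr mulrC mulNr.
Qed.

Lemma ker_nz (R : realType) (m n : nat) (M : 'M[R]_(n, m)) : (m < n)%N ->
  exists2 l : 'rV[R]_n, l != 0 & l *m M = 0.
Proof.
move=> hmn.
have hr : (0 < \rank (kermx M))%N.
  by rewrite mxrank_ker; have := rank_leq_col M; lia.
have : kermx M != 0 by apply: contraTneq hr => ->; rewrite mxrank0.
case: (pickP (fun i => row i (kermx M) != 0)) => [i hi _|h].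
  by exists (row i (kermx M)) => //; rewrite -row_mul mulmx_ker row0.
move/eqP; case; apply/row_matrixP => i; rewrite row0.
by move: (h i) => /negbFE/eqP.
Qed.

Definition Mc {R : realType} {d : nat} (p : 'I_(d + 3) -> 'rV[R]_d)
  (c : 'I_(d+3) -> R) : 'M[R]_(d+3, d + 2) :=
  \matrix_(i, j) match split j with
                 | inl j' => p i 0 j'
                 | inr k => if k == ord0 then 1 else c i end.

Theorem corollary2 (R : realType) (d : nat) (hd : (1 <= d)%N)
  (p : 'I_(d + 3) -> 'rV[R]_d) (hp : injective p) :
  exists A B : {set 'I_(d + 3)},
    [/\ [disjoint A & B], #|A| = #|B| &
        exists x : 'rV[R]_d, in_conv p A x /\ in_conv p B x].
Proof.
have ker c : exists2 l : 'rV[R]_(d+3), l != 0 & l *m Mc p c = 0.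
  by apply: ker_nz; lia.
have eqs c (l : 'rV[R]_(d+3)) : l *m Mc p c = 0 ->
    [/\ \sum_i l 0 i = 0, \sum_i l 0 i *: p i = 0 & \sum_i l 0 i * c i = 0].
  move=> hl.
  have e (j : 'I_(d + 2)) : \sum_i l 0 i * (match split j with
                 | inl j' => p i 0 j'
                 | inr k => if k == ord0 then 1 else c i end) = 0.
    have h : (l *m Mc p c) 0 j = (0 : 'M[R]_(1, d + 2)) 0 j by rewrite hl.
    move: h; rewrite !mxE => h; rewrite -[X in _ = X]h.
    by symmetry; apply: eq_bigr => i _; rewrite mxE.
  split.
  - have := e (rshift d (ord0 : 'I_2)).
    rewrite (unsplitK (inr _ (ord0 : 'I_2)) : split (rshift d ord0) = inr ord0) eqxx.
    by under eq_bigr do rewrite mulr1.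
  - apply/rowP => j; rewrite summxE [RHS]mxE -[RHS](e (lshift 2 j)).
    rewrite (unsplitK (inl _ j) : split (lshift 2 j) = inl j).
    by apply: eq_bigr => i _; rewrite mxE.
  - have := e (rshift d (@Ordinal 2 1 isT)).
    by rewrite (unsplitK (inr _ (@Ordinal 2 1 isT)) : split (rshift d (@Ordinal 2 1 isT)) = inr (@Ordinal 2 1 isT)).
have [v0 v0nz hv0] := ker (fun _ => 0).
have [sv vv _] := eqs _ _ hv0.
have [i0 vi0] : exists i0, v0 0 i0 != 0.
  case: (pickP (fun i => v0 0 i != 0)) => [i0 hi0|h]; first by exists i0.
  move/eqP: v0nz; case; apply/rowP => j; rewrite mxE.
  by move: (h j) => /negbFE/eqP.
have [u0 u0nz hu0] := ker (fun i => (i == i0)%:R).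
have [su uu ui] := eqs _ _ hu0.
have ui0 : u0 0 i0 = 0.
  move: ui; rewrite (bigD1 i0) //= eqxx mulr1 big1 ?addr0 //.
  by move=> i /negbTE ->; rewrite mulr0.
have [i1 ui1] : exists i1, u0 0 i1 != 0.
  case: (pickP (fun i => u0 0 i != 0)) => [i hi|h]; first by exists i.
  move/eqP: u0nz; case; apply/rowP => j; rewrite mxE.
  by move: (h j) => /negbFE/eqP.
have hn : (d + 3 <= ((d + 3)./2).*2.+1)%N.
  by have := odd_double_half (d + 3); case: odd => /=; lia.
have [a [b [hab [hP hN]]]] := @key2 R _ _ (fun i => u0 0 i) (fun i => v0 0 i) hn.
apply: (@final R d (d + 3) p (fun i => a * u0 0 i + b * v0 0 i) ((d + 3)./2)) => //.
- case: hab => [->|[-> ->]]; last by exists i0; rewrite mul0r add0r mul1r.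
  case: (eqVneq b 0) => [->|b0].
    by exists i1; rewrite mul1r mul0r addr0.
  by exists i0; rewrite ui0 mul1r add0r mulf_neq0.
- by rewrite big_split /= -!mulr_sumr su sv !mulr0 addr0.
- under eq_bigr do rewrite scalerDl -!scalerA.
  by rewrite big_split /= -!scaler_sumr uu vv !scaler0 addr0.
- by have := odd_double_half (d + 3); lia.
Qed.
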